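(* Let $F$ be a Fourier matrix of size $N$ whose indexing group $I_F$ is cyclic. Then $h^{FF}_\rho=\rho$ for every automorphism $\rho$ of $I_F$, and the set of pairs $(P,R)$ of $N\times N$ permutation matrices satisfying $PFR^{-1}=F$ equals $\{(P_\rho,P_\rho^T):\ \rho\in\mathrm{Aut}(I_F)\}$.
   Context: For $n\ge1$, $F_n$ is the $n\times n$ matrix with rows and columns indexed by $\mathbb Z_n$ and entries $e^{2\pi i\,\tilde i\tilde j/n}$. A Fourier matrix is $F=F_{N_1}\otimes\cdots\otimes F_{N_r}$ of size $N=N_1\cdots N_r$, indexed by $I_F=\mathbb Z_{N_1}\times\cdots\times\mathbb Z_{N_r}$ with $F_{i,j}=\prod_x(F_{N_x})_{i_x,j_x}$; group indices correspond to ordinary indices via lexicographic order. For a bijection $\rho:I_F\to I_F$, $P_\rho$ is the permutation matrix with $(P_\rho)_{i,\rho(i)}=1$. For an automorphism $\rho$ of $I_F$, $h^{FF}_\rho:I_F\to I_F$ is the unique bijection with $F_{\rho(i),j}=F_{i,h^{FF}_\rho(j)}$ for all $i,j\in I_F$. *)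

(* Defs.v *)
From HB Require Import structures.
From mathcomp Require Import all_boot all_order all_algebra.
From mathcomp Require Import reals trigo complex.
Set Implicit Arguments. Unset Strict Implicit. Unset Printing Implicit Defensive.
Import Order.TTheory GRing.Theory Num.Theory.
Local Open Scope ring_scope.

Section Fourier.
Variable R : realType.
Local Notation C := (R[i])%C.

Definition wn (n : nat) : C :=
  (cos (2 * pi / n%:R) +i* sin (2 * pi / n%:R))%C.

(* Fourier matrix F_{N_1} (x) ... (x) F_{N_r};  Ns x = N_{x+1} *)
Variables (r : nat) (Ns : 'I_r -> nat).

Definition NF : nat := (\prod_(x < r) Ns x)%N.

(* lexicographic (mixed radix, first coordinate most significant):
   the place value of coordinate x *)
Definition stride (x : 'I_r) : nat := (\prod_(y < r | x < y) Ns y)%N.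

(* the x-th coordinate in Z_{N_x} of the group index corresponding to the
   ordinary index i *)
Definition digit (x : 'I_r) (i : 'I_NF) : nat := ((i %/ stride x) %% Ns x)%N.

Definition FourierMx : 'M[C]_NF :=
  \matrix_(i, j) \prod_(x < r) wn (Ns x) ^+ (digit x i * digit x j).

Definition IF_add (i j k : 'I_NF) : Prop :=
  forall x, digit x k = ((digit x i + digit x j) %% Ns x)%N.

Definition IF_cyclic : Prop :=
  exists g : 'I_NF, forall i : 'I_NF, exists m : nat,
    forall x, digit x i = ((m * digit x g) %% Ns x)%N.

Definition IF_aut (rho : 'I_NF -> 'I_NF) : Prop :=
  bijective rho /\
  forall i j k, IF_add i j k -> IF_add (rho i) (rho j) (rho k).

Definition is_hFF (rho h : 'I_NF -> 'I_NF) : Prop :=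
  bijective h /\ forall i j, FourierMx (rho i) j = FourierMx i (h j).

Definition Pmx (rho : 'I_NF -> 'I_NF) : 'M[C]_NF :=
  \matrix_(i, j) (rho i == j)%:R.

End Fourier.

Arguments wn : clear implicits.
Arguments NF : clear implicits.
Arguments stride : clear implicits.
Arguments digit : clear implicits.
Arguments FourierMx : clear implicits.
Arguments IF_add : clear implicits.
Arguments IF_cyclic : clear implicits.
Arguments IF_aut : clear implicits.
Arguments is_hFF : clear implicits.
Arguments Pmx : clear implicits.

(* Main.v *)
Require Import Defs.
From HB Require Import structures.
From mathcomp Require Import all_boot all_order all_algebra.
From mathcomp Require Import reals trigo complex.
From mathcomp Require Import fingroup perm zify.
Import Order.TTheory GRing.Theory Num.Theory.
Local Open Scope ring_scope.
Local Open Scope complex_scope.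
Lemma mulcE (R : realType) (a b c d : R) :
  (a +i* b) * (c +i* d) = (a*c - b*d) +i* (a*d + b*c).
Proof. by []. Qed.
Lemma demoivre (R : realType) (t : R) (k : nat) :
  (cos t +i* sin t) ^+ k = cos (k%:R * t) +i* sin (k%:R * t).
Proof.
elim: k => [|k IH]; first by rewrite expr0 mul0r cos0 sin0.
rewrite exprSr IH mulcE -cosD [X in _ +i* X]addrC -sinD mulrSr mulrDl mul1r.
by [].
Qed.
Lemma cos_lt1 (R : realType) (t : R) : 0 < t < pi *+ 2 -> cos t < 1.
Proof.
move=> /andP[t0 t2].
have key : forall u : R, 0 < u <= pi -> cos u < 1.
  move=> u /andP[u0 upi]; rewrite -cos0 (ltr_cos) ?in_itv /= ?upi ?lexx ?pi_ge0 ?(ltW u0) //.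
have [tpi|pit] := lerP t pi; first by apply: key; rewrite t0 tpi.
have -> : cos t = cos (pi *+ 2 - t).
  by rewrite -[in RHS]cosN opprB -[in RHS](cosD2pi (t - pi *+ 2)) subrK.
apply: key; rewrite subr_gt0 t2 /= lerBlDr -lerBlDl.
by rewrite mulr2n addrK ltW.
Qed.
Lemma wn_pow (R : realType) n k : wn R n ^+ k =
  cos (k%:R * (2 * pi / n%:R)) +i* sin (k%:R * (2 * pi / n%:R)).
Proof. by rewrite /wn demoivre. Qed.
Lemma wn_n (R : realType) n : (0 < n)%N -> wn R n ^+ n = 1.
Proof.
move=> n0; rewrite wn_pow mulrCA mulfV ?pnatr_eq0 -?lt0n // mulr1.
by rewrite mulr_natl cos2pi sin2pi.
Qed.
Lemma wn_neq1 (R : realType) n k : (0 < k < n)%N -> wn R n ^+ k != 1.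
Proof.
move=> /andP[k0 kn]; rewrite wn_pow; apply/negP => /eqP[] + _.
apply/eqP; rewrite lt_eqF // cos_lt1 //.
have n0 : (0 < n%:R :> R) by rewrite ltr0n (ltn_trans k0).
rewrite mulrCA -mulrA mulr_gt0 ?pi_gt0 ?mulr_gt0 ?ltr0n ?invr_gt0 //=.
rewrite -(mulr_natl pi 2) ltr_pM2l ?ltr0n // gtr_pMr ?pi_gt0 // ltr_pdivrMr // mul1r ltr_nat.
- by [].
- exact: pi_gt0.
Qed.

Lemma wn_mod (R : realType) n a : (0 < n)%N -> wn R n ^+ a = wn R n ^+ (a %% n).
Proof.
by move=> n0; rewrite {1}(divn_eq a n) exprD mulnC exprM wn_n // expr1n mul1r.
Qed.

Lemma wn_eq (R : realType) n a b : (0 < n)%N -> wn R n ^+ a = wn R n ^+ b ->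
  (a %% n = b %% n)%N.
Proof.
move=> n0; rewrite (@wn_mod R n a n0) (@wn_mod R n b n0).
have : (a %% n < n)%N by rewrite ltn_pmod.
have : (b %% n < n)%N by rewrite ltn_pmod.
move: (a %% n)%N (b %% n)%N => {}a {}b.
have nz : wn R n != 0.
  apply/eqP => w0; have := @wn_n R n n0; rewrite w0 expr0n; case: n n0 {w0} => //.
  by move=> n _ /eqP; rewrite eq_sym oner_eq0.
wlog ab : a b / (a <= b)%N.
  move=> W bn an E; have [|ba] := leqP a b; first by move/W; apply.
  by apply/esym; apply: W => //; apply: ltnW.
move=> bn an E.
have E2 : wn R n ^+ a * wn R n ^+ (b - a) = wn R n ^+ a * 1.
  by rewrite -exprD subnKC // mulr1 E.
move/(mulfI (expf_neq0 a nz)): E2 => E3.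
have [ba|] := posnP (b - a)%N; first by apply/eqP; rewrite eqn_leq ab -subn_eq0 ba.
move=> ba0; have := @wn_neq1 R n (b - a)%N.
by rewrite ba0 E3 eqxx /= => /(_ (leq_ltn_trans (leq_subr _ _) bn)).
Qed.
Section Comb.

Variables (r : nat) (Ns : 'I_r -> nat).
Hypothesis HN : forall x, (0 < Ns x)%N.
Local Notation N := (NF r Ns).
Local Notation dig := (digit r Ns).

Lemma digit_lt x i : (dig x i < Ns x)%N.
Proof. exact: ltn_pmod. Qed.

Definition T (k : nat) : nat := (\prod_(y < r | (k <= y)%N) Ns y)%N.

Lemma strideE x : stride r Ns x = T x.+1.
Proof. by []. Qed.

Lemma TS (x : 'I_r) : T x = (Ns x * T x.+1)%N.
Proof.
rewrite /T (bigD1 x) //=. f_equal; apply: eq_bigl => y.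
by rewrite ltn_neqAle andbC eq_sym.
Qed.

Lemma Tr : T r = 1%N.
Proof. by rewrite /T big_pred0 // => y; rewrite leqNgt ltn_ord. Qed.

Lemma T0 : T 0 = N.
Proof. by []. Qed.

Lemma digit_inj a b : (forall x, dig x a = dig x b) -> a = b.
Proof.
move=> H.
suff: forall m, (m <= r)%N -> (a %% T (r - m) = b %% T (r - m))%N.
  move/(_ r (leqnn r)); rewrite subnn T0 !modn_small //.
  by move=> E; apply: val_inj.
elim=> [|m IH] mr; first by rewrite subn0 Tr !modn1.
have kr : (r - m.+1 < r)%N by rewrite subnS prednK ?leq_subr // subn_gt0.
have := TS (Ordinal kr) => /= E.
have Sk : (r - m.+1).+1 = (r - m)%N by rewrite subnS prednK // subn_gt0.
rewrite E Sk.
have hd (c : 'I_N) : (c %% (Ns (Ordinal kr) * T (r - m)) = dig (Ordinal kr) c * T (r-m) + c %% T (r - m))%N.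
  rewrite /digit strideE /= Sk modn_divl {1}(divn_eq (c %% _) (T (r - m))).
  by rewrite modn_dvdm // dvdn_mull.
by rewrite !hd H IH // ltnW.
Qed.

Definition digv (i : 'I_N) : {dffun forall x : 'I_r, 'I_(Ns x)} :=
  finfun (fun x => Ordinal (digit_lt x i)).

Lemma digv_inj : injective digv.
Proof.
move=> a b E; apply: digit_inj => x.
by have := congr1 (fun f : {dffun forall x : 'I_r, 'I_(Ns x)} => val (f x)) E; rewrite /= !ffunE.
Qed.

Lemma card_dig : #|{dffun forall x : 'I_r, 'I_(Ns x)}| = N.
Proof.
rewrite card_dep_ffun foldrE big_map /NF big_enum /=.
by apply: eq_bigr => x _; rewrite card_ord.
Qed.

Lemma digit_surj (d : forall x : 'I_r, 'I_(Ns x)) :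
  exists i : 'I_N, forall x, dig x i = d x.
Proof.
have cc : (#|{dffun forall x : 'I_r, 'I_(Ns x)}| <= #|'I_N|)%N.
  by rewrite card_dig card_ord.
have [g gK Kg] := inj_card_bij digv_inj cc.
exists (g (finfun d)) => x.
by have := congr1 (fun f : {dffun forall x : 'I_r, 'I_(Ns x)} => val (f x)) (Kg (finfun d)); rewrite /= !ffunE.
Qed.


Variable R : realType.
Local Notation F := (FourierMx R r Ns).
Local Notation w x := (wn R (Ns x)).

Lemma FE i j : F i j = \prod_(x < r) w x ^+ (dig x i * dig x j).
Proof. by rewrite mxE. Qed.

Lemma F_sym i j : F i j = F j i.
Proof. by rewrite !FE; apply: eq_bigr => x _; rewrite mulnC. Qed.

Lemma F_add i j k m : IF_add r Ns i j k -> F k m = F i m * F j m.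
Proof.
move=> H; rewrite !FE -big_split /=; apply: eq_bigr => x _.
rewrite -exprD -mulnDl H (@wn_mod R _ _ (HN x)) [in RHS](@wn_mod R _ _ (HN x)).
by rewrite modnMml.
Qed.

Lemma e_exists x : exists e : 'I_N, forall y, dig y e = ((x == y) %% Ns y)%N.
Proof.
have [e He] := digit_surj (fun y => Ordinal (ltn_pmod (x == y) (HN y))).
by exists e.
Qed.

Lemma F_e x e j : (forall y, dig y e = ((x == y) %% Ns y)%N) -> F e j = w x ^+ dig x j.
Proof.
move=> He; rewrite FE (bigD1 x) //= big1 ?mulr1.
  rewrite He eqxx (@wn_mod R _ _ (HN x)) [in RHS](@wn_mod R _ _ (HN x)).
  by rewrite modnMml mul1n.
by move=> y yx; rewrite He eq_sym (negbTE yx) mod0n mul0n expr0.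
Qed.

Lemma col_inj a b : (forall i, F i a = F i b) -> a = b.
Proof.
move=> H; apply: digit_inj => x.
have [e He] := e_exists x.
have := H e; rewrite !(F_e x e _ He) => /(@wn_eq R _ _ _ (HN x)).
by rewrite !modn_small ?digit_lt.
Qed.

Lemma char_add a b c : (forall l, F c l = F a l * F b l) -> IF_add r Ns a b c.
Proof.
move=> H x; have [e He] := e_exists x.
have := H e; rewrite ![F _ e]F_sym !(F_e x e _ He) -exprD => /(@wn_eq R _ _ _ (HN x)).
by rewrite (modn_small (digit_lt _ _)).
Qed.

Hypothesis Hcyc : IF_cyclic r Ns.

Lemma aut_mul (rho : 'I_N -> 'I_N) g : IF_aut r Ns rho -> forall m i,
  (forall x, dig x i = ((m * dig x g) %% Ns x)%N) ->
  forall x, dig x (rho i) = ((m * dig x (rho g)) %% Ns x)%N.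
Proof.
move=> [_ radd]; elim=> [|m IH] i Hi.
  have : IF_add r Ns i i i by move=> x; rewrite !Hi !mul0n !mod0n.
  move/radd => H x; rewrite mul0n mod0n.
  have := H x; set d := dig x (rho i) => Hd.
  have : (d + 0 == d + d %[mod Ns x])%N.
    by rewrite addn0 -Hd modn_small ?digit_lt.
  rewrite eqn_modDl mod0n modn_small ?digit_lt // => /eqP <-.
  by [].
have [i' Hi'] := digit_surj (fun y => Ordinal (ltn_pmod (m * dig y g) (HN y))).
have Ha : IF_add r Ns i' g i.
  by move=> x; rewrite Hi Hi' /= modnDml mulSn addnC.
move=> x; rewrite (radd _ _ _ Ha x) (IH i' Hi') modnDml mulSn addnC //.
Qed.

Lemma aut_sym rho : IF_aut r Ns rho -> forall i j, F (rho i) j = F i (rho j).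
Proof.
move=> Hrho i j; have [g Hg] := Hcyc.
have [mi Hi] := Hg i; have [mj Hj] := Hg j.
have Ri := @aut_mul rho g Hrho mi i Hi; have Rj := @aut_mul rho g Hrho mj j Hj.
rewrite !FE; apply: eq_bigr => x _.
rewrite Ri Rj Hi Hj (@wn_mod R _ _ (HN x)) [in RHS](@wn_mod R _ _ (HN x)).
rewrite !modnMm; congr (wn R (Ns x) ^+ (_ %% _)); lia.
Qed.
End Comb.

Local Close Scope complex_scope.

Theorem lemma4p9 (R : realType) (r : nat) (Ns : 'I_r -> nat)
  (HN : forall x, (0 < Ns x)%N)
  (Hcyc : IF_cyclic r Ns) :
  (forall rho : 'I_(NF r Ns) -> 'I_(NF r Ns), IF_aut r Ns rho ->
     forall h, is_hFF R r Ns rho h <-> h =1 rho) /\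
  (forall P Q : 'M[R[i]%C]_(NF r Ns),
     (is_perm_mx P /\ is_perm_mx Q /\ P *m FourierMx R r Ns *m invmx Q = FourierMx R r Ns)
     <-> exists rho, IF_aut r Ns rho /\ P = Pmx R r Ns rho /\ Q = (Pmx R r Ns rho)^T).
Proof.
have symF := @aut_sym r Ns HN R Hcyc.
have colI := @col_inj r Ns HN R.
have part1 : forall rho : 'I_(NF r Ns) -> 'I_(NF r Ns), IF_aut r Ns rho ->
     forall h, is_hFF R r Ns rho h <-> h =1 rho.
  move=> rho Hrho h; split.
    by move=> [_ hF] j; apply: colI => i; rewrite -hF symF.
  move=> hr; split.
  case: Hrho => bij _; exact: (eq_bij bij (fun x => esym (hr x))).
  by move=> i j; rewrite hr symF.
split => // P Q; split.
  move=> [/is_perm_mxP [s ->] [/is_perm_mxP [t ->] E]].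
  have E2 : perm_mx s *m FourierMx R r Ns = FourierMx R r Ns *m perm_mx t.
    by rewrite -{2}E mulmxKV // unitmx_perm.
  have Ent : forall i j, FourierMx R r Ns (s i) j = FourierMx R r Ns i ((t^-1)%g j).
    move=> i j; have := congr1 (fun M : 'M[R[i]%C]_(NF r Ns) => M i j) E2.
    have -> : perm_mx t = perm_mx ((t^-1)^-1)%g :> 'M[R[i]%C]_(NF r Ns) by rewrite invgK.
    by rewrite -row_permE -col_permE !mxE.
  have Haut : IF_aut r Ns s.
    split; first exact: (injF_bij (@perm_inj _ s)).
    move=> i j k Hijk; apply: (@char_add r Ns HN R) => l.
    by rewrite !Ent (@F_add r Ns HN R i j k).
  exists s; split=> //.
  have ht : (t^-1)%g =1 s.
    apply/(part1 s Haut); split; first exact: (injF_bij (@perm_inj _ _)).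
    by move=> i j; rewrite Ent.
  have -> : t = (s^-1)%g by apply/permP => j; apply: (@perm_inj _ (t^-1)%g); rewrite permK ht permKV.
  split; apply/matrixP => i j; first by rewrite perm_mxEsub !mxE.
  by rewrite -tr_perm_mx !mxE.
move=> [rho [Hrho [-> ->]]].
have rinj : injective rho by case: Hrho => /bij_inj.
pose s := perm rinj.
have Ps : Pmx R r Ns rho = perm_mx s.
  by apply/matrixP => i j; rewrite !mxE permE.
rewrite Ps tr_perm_mx; split; first exact: perm_mx_is_perm.
split; first exact: perm_mx_is_perm.
have E : perm_mx s *m FourierMx R r Ns = FourierMx R r Ns *m perm_mx (s^-1)%g.
  apply/matrixP => i j; rewrite -row_permE -col_permE !mxE !permE.
  by have := symF rho Hrho i j; rewrite !mxE.
by rewrite E mulmxK // unitmx_perm.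
Qed.
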